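(* Let $P=(N,L)$ be a filtration pair for an isolated invariant set $S$. If $x\in N$ satisfies $f^n(x)\in N\setminus L$ for all $n>0$, then $\omega(x)\subset S$.
   Context: Let $X$ be a locally compact metric space, $U\subset X$ open and $f:U\to X$ continuous. A solution through $x$ is a map $\sigma:\mathbb Z\to U$ with $\sigma(0)=x$ and $f(\sigma(n))=\sigma(n+1)$ for all $n$; for $N\subset U$, $\operatorname{Inv} N$ is the set of $x\in N$ admitting a solution through $x$ with all values in $N$. A compact $N\subset U$ is an isolating neighborhood if $\operatorname{Inv} N\subset\operatorname{Int} N$; $S$ is an isolated invariant set if $S=\operatorname{Inv} N$ for some isolating neighborhood $N$. The exit set of $N$ is $N^-=\{x\in N:f(x)\notin\operatorname{Int} N\}$. A filtration pair for an isolated invariant set $S$ is a pair of compact sets $L\subset N$ contained in the interior of the domain of $f$, each the closure of its interior, such that (1) $\operatorname{cl}(N\setminus L)$ is an isolating neighborhood with $\operatorname{Inv}\operatorname{cl}(N\setminus L)=S$; (2) $L$ is a neighborhood of $N^-$ in $N$; (3) $f(L)\cap\operatorname{cl}(N\setminus L)=\emptyset$. The $\omega$-limit set is $\omega(x)=\bigcap_{K>0}\operatorname{cl}\big(\bigcup_{n>K}\{f^n(x)\}\big)$. *)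

(* Defs.v *)
From HB Require Import structures.
From mathcomp Require Import all_boot all_order all_algebra.
From mathcomp Require Import all_classical all_reals all_analysis.
Set Implicit Arguments. Unset Strict Implicit. Unset Printing Implicit Defensive.
Import Order.TTheory GRing.Theory Num.Theory.
Local Open Scope classical_set_scope.
Local Open Scope ring_scope.

(* The partial map f : U -> X is modelled as a total map f : X -> X of which
   only the values on U are ever used. *)
Section Conley.
Context {R : realType} {X : pseudoMetricType R}.
Variables (U : set X) (f : X -> X).

Definition solution_through (sigma : int -> X) (x : X) : Prop :=
  sigma 0 = x /\ forall n : int, U (sigma n) /\ f (sigma n) = sigma (n + 1).

Definition Inv (N : set X) : set X :=
  [set x | N x /\ exists sigma, solution_through sigma x /\ forall n, N (sigma n)].

Definition isolating_nbhd (N : set X) : Prop :=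
  compact N /\ N `<=` U /\ Inv N `<=` interior N.

Definition isolated_invariant_set (S : set X) : Prop :=
  exists N, isolating_nbhd N /\ S = Inv N.

Definition exit_set (N : set X) : set X :=
  [set x | N x /\ ~ (interior N) (f x)].

Definition rel_nbhd_in (N L A : set X) : Prop :=
  exists O : set X, open O /\ A `<=` O /\ O `&` N `<=` L.

Definition filtration_pair (S N L : set X) : Prop :=
  compact N /\ compact L /\ L `<=` N /\
  N `<=` interior U /\
  closure (interior N) = N /\ closure (interior L) = L /\
  (isolating_nbhd (closure (N `\` L)) /\ Inv (closure (N `\` L)) = S) /\
  rel_nbhd_in N L (exit_set N) /\
  f @` L `&` closure (N `\` L) = set0.

Definition omega_limit (x : X) : set X :=
  \bigcap_(K in [set K : nat | (0 < K)%N])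
     closure [set iter n f x | n in [set n : nat | (K < n)%N]].

End Conley.

(* Main.v *)
Require Import Defs.
From HB Require Import structures.
From mathcomp Require Import all_boot all_order all_algebra.
From mathcomp Require Import all_classical all_reals all_analysis.
From mathcomp Require Import zify.
Local Open Scope classical_set_scope.
Local Open Scope ring_scope.

Theorem mainTheorem8 (R : realType) (X : pseudoMetricType R)
  (U : set X) (f : X -> X) (S N L : set X) (x : X) :
  hausdorff_space X ->
  locally_compact [set: X] ->
  open U ->
  (forall y, U y -> {for y, continuous f}) ->
  isolated_invariant_set U f S ->
  filtration_pair U f S N L ->
  N x ->
  (forall n : nat, (0 < n)%N -> (N `\` L) (iter n f x)) ->
  omega_limit f x `<=` S.
Proof.
move=> hX _ _ fc _ [_ [_ [_ [_ [_ [_ [[[cM [MU _]] InvM] _]]]]]]] _ orb.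
set M := closure (N `\` L) in cM MU InvM.
set W := omega_limit f x.
have WM : W `<=` M.
  move=> y Wy; have := Wy 1%N erefl.
  apply: closureS => _ [n n1 <-]; apply: orb; exact: ltn_trans n1.
have WU : W `<=` U by move=> y /WM /MU.
have fW : forall y, W y -> W (f y).
  move=> y Wy K K0 B Bfy.
  have := fc y (WU y Wy) B Bfy => /= Bn.
  have [_ [[n nK <-] /= Bn']] := Wy K K0 _ Bn.
  exists (iter n.+1 f x); split => //; exists n.+1 => //; exact: ltnW.
have gW : forall y, W y -> exists z, W z /\ f z = y.
  move=> y Wy.
  pose D := [set KV : nat * set X | nbhs y KV.2].
  pose B := fun KV : nat * set X =>
    [set iter n f x | n in [set n : nat | (KV.1 < n)%N /\ KV.2 (iter n.+1 f x)]].
  have FF : Filter (filter_from D B).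
    apply: filter_from_filter; first by exists (0%N, setT); exact: filterT.
    move=> [K V] [K' V'] /= DV DV'; exists (maxn K K', V `&` V').
      exact: filterI.
    move=> _ [n [/= nK [Vn V'n]] <-]; split; exists n => //=; split => //.
      exact: leq_ltn_trans (leq_maxl _ _) nK.
    exact: leq_ltn_trans (leq_maxr _ _) nK.
  have PF : ProperFilter (filter_from D B).
    apply: filter_from_proper => -[K V] /= DV.
    have [_ [[m mK <-] /= Vm]] := Wy K.+2 erefl V DV.
    rewrite /= in mK; case: m mK Vm => [//|m] mK Vm.
    by exists (iter m f x); exists m => //; split => //=; rewrite ltnS in mK; exact: ltnW mK.
  have FM : filter_from D B M.
    exists (0%N, setT); first exact: filterT.
    move=> _ [n [/= n0 _] <-]; apply: subset_closure; exact: orb.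
  have [z [Mz cz]] := cM _ PF FM.
  exists z; split.
    move=> K K0 V Vz.
    have BK : filter_from D B (B (K, setT)) by exists (K, setT) => //; exact: filterT.
    have [p [[n [/= nK _] <-] Vn]] := cz _ _ BK Vz.
    by exists (iter n f x); split => //; exists n.
  apply: hX => A C Afz Cy.
  have Az := fc z (MU z Mz) A Afz.
  have BC : filter_from D B (B (0%N, C)) by exists (0%N, C).
  have [p [[n [/= _ Cn] <-] An]] := cz _ _ BC Az.
  by exists (iter n.+1 f x); split => //=; rewrite iterS.
have [g hg] : exists g : X -> X, forall y, W y -> W (g y) /\ f (g y) = y.
  exists (fun y => match pselect (W y) with
                   | left Wy => projT1 (cid (gW y Wy)) | right _ => y end).
  move=> y Wy; case: pselect => // Wy'; exact: projT2 (cid (gW y Wy')).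
move=> y Wy; rewrite -InvM; split; first exact: WM.
pose sigma := fun n : int => match n with
  | Posz k => iter k f y | Negz k => iter k.+1 g y end.
have Ws : forall n, W (sigma n).
  case=> k /=; elim: k => [|k IH] //=.
  - exact: fW.
  - exact: (hg y Wy).1.
  - exact: (hg _ IH).1.
exists sigma; split; last by move=> n; apply: WM.
split => // -[k|k]; split; try exact: WU (Ws _).
  have -> : (Posz k + 1 = Posz k.+1)%R by lia.
  by [].
case: k => [|k] /=.

  exact: (hg _ Wy).2.
rewrite subn1 /=.
exact: (hg _ (Ws (Negz k))).2.
Qed.
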